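(* For every $n\geq1$ and all $i,j\in I$ with $|i|<|j|$ we have $C^{(n)}_{ij}\cdot v=0$.
   Context: Let $N\geq1$, $I=\{-N,\dots,-1,1,\dots,N\}$, and for $k\in I$ put $\bar k=0$ if $k>0$, $\bar k=1$ if $k<0$. The Lie superalgebra $\mathfrak{q}(N)$ over $\mathbb{C}$ is spanned by elements $F_{ij}$ ($i,j\in I$) with $F_{-i,-j}=F_{ij}$ (realized as $F_{ij}=E_{ij}+E_{-i,-j}\in\mathfrak{gl}(N|N)$), $F_{ij}$ of parity $\bar\imath+\bar\jmath\bmod 2$, and supercommutator $$[F_{ij}, F_{kl}] = \delta_{kj} F_{il} - (-1)^{(\bar{\imath}+ \bar{\jmath})(\bar{k} + \bar{l})} \delta_{il} F_{kj} + \delta_{k,-j} F_{-i,l} - (-1)^{(\bar{\imath} + \bar{\jmath})(\bar{k} + \bar{l})} \delta_{-i,l} F_{k,-j}.$$ For $n\geq1$ define $C^{(n)}_{ij}\in U(\mathfrak{q}(N))$ by $$C^{(n)}_{ij} = \sum_{k_1,\ldots,k_{n-1}\in I}F_{ik_1} (-1)^{\bar{k}_1} F_{k_1k_2} (-1)^{\bar{k}_2} \cdots F_{k_{n-2}k_{n-1}} (-1)^{\bar{k}_{n-1}} F_{k_{n-1}j}$$ (so $C^{(1)}_{ij}=F_{ij}$). Let $V$ be a representation of $\mathfrak{q}(N)$ and $v\in V$ a vector such that $F_{ij}\cdot v=0$ whenever $|i|<|j|$, and $F_{ii}\cdot v=\lambda_i v$ for $i=1,\dots,N$, where $\lambda_1,\dots,\lambda_N\in\mathbb{C}$.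 *)

(* Defs.v *)
From HB Require Import structures.
From mathcomp Require Import all_boot all_order all_algebra.
Set Implicit Arguments. Unset Strict Implicit. Unset Printing Implicit Defensive.
Import Order.TTheory GRing.Theory Num.Theory.
Local Open Scope ring_scope.

Definition idxI (N : nat) : seq int :=
  [seq (Posz k.+1) | k <- iota 0 N] ++ [seq - (Posz k.+1) | k <- iota 0 N].

Definition kbar (k : int) : bool := k < 0.

Definition parF (i j : int) : bool := kbar i (+) kbar j.

Definition ssign (R : pzRingType) (i j k l : int) : R :=
  (-1) ^+ (parF i j && parF k l).

(* rho i j is the operator by which F_ij acts on V. *)
Definition is_qrep (R : pzRingType) (V : lmodType R) (N : nat)
    (rho : int -> int -> {linear V -> V}) : Prop :=
  (forall i j, i \in idxI N -> j \in idxI N -> rho (- i) (- j) =1 rho i j) /\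
  (forall i j k l, i \in idxI N -> j \in idxI N -> k \in idxI N -> l \in idxI N ->
     forall x : V,
       rho i j (rho k l x) - ssign R i j k l *: rho k l (rho i j x)
       = (k == j)%:R *: rho i l x
         - ssign R i j k l *: ((i == l)%:R *: rho k j x)
         + (k == - j)%:R *: rho (- i) l x
         - ssign R i j k l *: ((- i == l)%:R *: rho k (- j) x)).

(* Copn m i j is the action of C^{(m+1)}_{ij} on V:
   C^{(1)}_{ij} = F_ij,  C^{(m+1)}_{ij} = sum_k F_ik (-1)^{\bar k} C^{(m)}_{kj}. *)
Fixpoint Copn (R : pzRingType) (V : lmodType R) (N : nat)
    (rho : int -> int -> {linear V -> V}) (m : nat) (i j : int) (x : V) : V :=
  match m with
  | 0 => rho i j x
  | m'.+1 => \sum_(k <- idxI N) rho i k ((-1) ^+ kbar k *: Copn N rho m' k j x)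
  end.

Definition Cop (R : pzRingType) (V : lmodType R) (N : nat)
    (rho : int -> int -> {linear V -> V}) (n : nat) (i j : int) (x : V) : V :=
  Copn N rho n.-1 i j x.

(* Main.v *)
Require Import Defs.
From HB Require Import structures.
From mathcomp Require Import all_boot all_order all_algebra.
From mathcomp Require Import zify ring.
Import Order.TTheory GRing.Theory Num.Theory.
Local Open Scope ring_scope.

Lemma idxI_uniq N : uniq (idxI N).
Proof.
rewrite /idxI cat_uniq !map_inj_uniq ?iota_uniq //=.
- rewrite andbT; apply/hasPn => x /mapP [k _ ->]; apply/mapP => -[k' _ /eqP]; lia.
- by move=> x y /eqP; rewrite eqr_opp => /eqP [->].
- by move=> x y [->].
Qed.

Lemma idxI_neq0 N k : k \in idxI N -> k != 0.
Proof. by rewrite mem_cat => /orP [] /mapP [j _ ->]; apply/eqP; lia. Qed.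

Lemma idxI_opp N k : k \in idxI N -> - k \in idxI N.
Proof.
rewrite !mem_cat => /orP [] /mapP [j Hj ->]; apply/orP.
  by right; apply/mapP; exists j.
by left; apply/mapP; exists j => //; rewrite opprK.
Qed.

Lemma kbarN k : k != 0 -> kbar (- k) = ~~ kbar k.
Proof. move=> H; rewrite /kbar oppr_lt0 ltNge le_eqVlt (negbTE H) //. Qed.

Lemma grp_aux (M : zmodType) (x1 y1 x2 y2 x3 x4 : M) :
  x1 - y1 + x2 - y2 + y1 - x3 + y2 - x4 = x1 - x3 + x2 - x4.
Proof.
rewrite (addrAC _ (- y2) y1) (addrAC _ x2 y1) subrK.
rewrite (addrAC _ (- x3) y2) subrK.
by rewrite (addrAC x1 x2 (- x3)).
Qed.

Section Comm.
Variables (C : numClosedFieldType) (N : nat) (V : lmodType C)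
  (rho : int -> int -> {linear V -> V}) (Hrep : is_qrep N rho).

Local Notation e k := ((-1 : C) ^+ kbar k).
Local Notation S := (ssign C).
Local Notation Cp := (Copn N rho).

Lemma ssign_mul a b c k d : S a b c k * S a b k d = S a b c d.
Proof.
rewrite /ssign /parF; case: (kbar a); case: (kbar b); case: (kbar c);
  case: (kbar k); case: (kbar d); by rewrite /= ?expr0 ?expr1 ?mulrNN ?mulr1 ?mul1r.
Qed.

Lemma ssign_e a b c a' b' : kbar a' (+) kbar b' = kbar a (+) kbar b ->
  S a b c a' * e a' = S a b c b' * e b'.
Proof.
rewrite /ssign /parF; case: (kbar a); case: (kbar b); case: (kbar c);
  case: (kbar a'); case: (kbar b'); by rewrite /= ?expr0 ?expr1 ?mulrNN ?mulr1 ?mul1r.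
Qed.

Lemma sum_delta p (f : int -> V) : p \in idxI N ->
  \sum_(k <- idxI N) (k == p)%:R *: f k = f p.
Proof.
move=> Hp; rewrite (bigD1_seq p) //= ?idxI_uniq // eqxx scale1r big1 ?addr0 //.
by move=> k /negbTE ->; rewrite scale0r.
Qed.

Lemma Copn0 m c d : Cp m c d 0 = 0.
Proof.
elim: m c => [|m IH] c /=; first by rewrite linear0.
by rewrite big1 // => k _; rewrite IH scaler0 linear0.
Qed.

Lemma comm m : forall a b c d x, a \in idxI N -> b \in idxI N ->
  c \in idxI N -> d \in idxI N ->
  rho a b (Cp m c d x) - S a b c d *: Cp m c d (rho a b x)
  = (c == b)%:R *: Cp m a d x - S a b c d *: ((a == d)%:R *: Cp m c b x)
    + (c == - b)%:R *: Cp m (- a) d x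
    - S a b c d *: ((- a == d)%:R *: Cp m c (- b) x).
Proof.
elim: m => [|m IH] a b c d x Ha Hb Hc Hd /=; first by apply: Hrep.2.
rewrite linear_sum scaler_sumr -sumrB.
have Hk : forall k, k \in idxI N ->
  rho a b (rho c k ((-1) ^+ kbar k *: Cp m k d x)) -
      S a b c d *: rho c k ((-1) ^+ kbar k *: Cp m k d (rho a b x)) =
  (c==b)%:R *: rho a k (e k *: Cp m k d x)
 - (k==a)%:R *: (S a b c k *: rho c b (e k *: Cp m k d x))
 + (c== -b)%:R *: rho (-a) k (e k *: Cp m k d x)
 - (k== -a)%:R *: (S a b c k *: rho c (-b) (e k *: Cp m k d x))
 + (k==b)%:R *: (S a b c k *: rho c k (e k *: Cp m a d x))
 - (a==d)%:R *: (S a b c d *: rho c k (e k *: Cp m k b x))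
 + (k== -b)%:R *: (S a b c k *: rho c k (e k *: Cp m (-a) d x))
 - (-a==d)%:R *: (S a b c d *: rho c k (e k *: Cp m k (-b) x)).
  move=> k Hk.
  have H1 : rho a b (rho c k (e k *: Cp m k d x)) =
    (c == b)%:R *: rho a k (e k *: Cp m k d x)
    - S a b c k *: ((a == k)%:R *: rho c b (e k *: Cp m k d x))
    + (c == - b)%:R *: rho (- a) k (e k *: Cp m k d x)
    - S a b c k *: ((- a == k)%:R *: rho c (- b) (e k *: Cp m k d x))
    + S a b c k *: rho c k (rho a b (e k *: Cp m k d x)).
    by apply/eqP; rewrite -subr_eq; apply/eqP; exact: (Hrep.2 a b c k Ha Hb Hc Hk).
  have H2 : rho a b (Cp m k d x) =
    (k == b)%:R *: Cp m a d x - S a b k d *: ((a == d)%:R *: Cp m k b x)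
    + (k == - b)%:R *: Cp m (- a) d x - S a b k d *: ((- a == d)%:R *: Cp m k (- b) x)
    + S a b k d *: Cp m k d (rho a b x).
    by apply/eqP; rewrite -subr_eq; apply/eqP; exact: (IH a b k d x Ha Hb Hk Hd).
  rewrite H1 [rho a b (_ *: _)]linearZ /= H2.
  set W := Cp m k d (rho a b x).
  have key : S a b c k *: rho c k (e k *: (S a b k d *: W)) = S a b c d *: rho c k (e k *: W).
    by rewrite scalerA mulrC -scalerA linearZ /= scalerA ssign_mul.
  rewrite scalerDr linearD scalerDr key addrA addrK.
  rewrite ?linearD ?linearN ?linearZ /= ?scalerDr ?scalerN ?scalerA ?linearD ?linearN ?linearZ /= ?scalerDr ?scalerN ?scalerA.
  rewrite !addrA; congr (_ - _ *: _ + _ - _ *: _ + _ *: _ - _ *: _ + _ *: _ - _ *: _);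
   rewrite ?(eq_sym a k) ?(eq_sym (-a) k) -?(ssign_mul a b c k d); move: ((-1 : C) ^+ kbar k) => t; ring.
rewrite (eq_big_seq _ Hk) !big_split /= !sumrN.
have Hna : - a \in idxI N by apply: idxI_opp.
have Hnb : - b \in idxI N by apply: idxI_opp.
rewrite !sum_delta //.
rewrite -!scaler_sumr.
have E1 : ssign C a b c a *: rho c b ((-1) ^+ kbar a *: Cp m a d x)
  = ssign C a b c b *: rho c b ((-1) ^+ kbar b *: Cp m a d x).
  by rewrite !linearZ /= !scalerA mulrC (ssign_e a b c a b) // mulrC.
have E2 : ssign C a b c (- a) *: rho c (- b) ((-1) ^+ kbar (- a) *: Cp m (- a) d x)
  = ssign C a b c (- b) *: rho c (- b) ((-1) ^+ kbar (- b) *: Cp m (- a) d x).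
  rewrite !linearZ /= !scalerA mulrC (ssign_e a b c (-a) (-b)); first by rewrite mulrC.
  rewrite !kbarN ?(@idxI_neq0 N a Ha) ?(@idxI_neq0 N b Hb) //.
  by rewrite addbN addNb negbK.
have swap : forall (s t : C) (v : V), s *: (t *: v) = t *: (s *: v).
  by move=> s t v; rewrite !scalerA mulrC.
rewrite E1 E2 [in RHS](swap (ssign C a b c d)) [in RHS](swap (ssign C a b c d)).
by rewrite grp_aux.
Qed.
End Comm.

Theorem mainTheorem4 (C : numClosedFieldType) (N : nat) (HN : (1 <= N)%N)
    (V : lmodType C) (rho : int -> int -> {linear V -> V})
    (Hrep : is_qrep N rho) (v : V) (lambda : nat -> C)
    (Hhw : forall i j, i \in idxI N -> j \in idxI N ->
             (`|i| < `|j|)%N -> rho i j v = 0)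
    (Hwt : forall i : nat, (1 <= i <= N)%N ->
             rho (Posz i) (Posz i) v = lambda i *: v) :
  forall n : nat, (1 <= n)%N ->
  forall i j, i \in idxI N -> j \in idxI N -> (`|i| < `|j|)%N ->
    Cop N rho n i j v = 0.
Proof.
move=> n _; rewrite /Cop; move: n.-1 => m.
elim: m => [|m IH] i j Hi Hj Hij /=; first exact: Hhw.
rewrite big1_seq // => k /andP [_ Hk].
case: (ltnP `|k| `|j|) => Hkj.
  by rewrite IH // scaler0 linear0.
have Hik : (`|i| < `|k|)%N by exact: leq_trans Hij Hkj.
rewrite linearZ /=.
have := @comm C N V rho Hrep m i k k j v Hi Hk Hk Hj.
rewrite Hhw // Copn0 scaler0 subr0 => ->.
have Hni : - i \in idxI N by apply: idxI_opp.
rewrite eqxx IH // (IH (-i)) ?abszN //.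
have -> : (i == j) = false.
  by apply/negbTE/eqP => E; move: Hij; rewrite E ltnn.
have -> : (- i == j) = false.
  by apply/negbTE/eqP => E; move: Hij; rewrite -E abszN ltnn.
by rewrite !(scale0r, scaler0, subr0, addr0).
Qed.
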